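(* Let $0\le a<b<1$ and $\lambda\ge 0$. Then $m(\lambda,a,b)\le\lambda+m(a,b)$, with equality if and only if $\lambda=0$.
   Context: $\zeta(t)=\frac{2}{1-t^2}$ and $\phi(t)=2\tanh^{-1}t$ on $[0,1)$. For a bounded function $\varrho\ge0$ on $[a,b]$ with $\varrho/\zeta$ non-decreasing, let $h$ be a primitive of $\varrho$, $\psi=e^h$, $\mathtt f(x)=x\zeta(x)^2\psi(x)$, $\mathtt g(x)=x\zeta(x)\psi(x)$, and $m(\varrho/\zeta,a,b):=\frac{\mathtt g(b)-\mathtt g(a)}{\int_a^b\mathtt f\,dt}$ (independent of the choice of primitive). $m(\lambda,a,b)$ denotes this quantity when $\varrho/\zeta\equiv\lambda$, i.e. $\varrho=\lambda\zeta$ (equivalently $\psi=e^{\lambda\phi}$ up to a constant factor), and $m(a,b):=m(0,a,b)=\frac{1+ab}{a+b}$. *)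

(* Defs.v *)
From Stdlib Require Import Reals.
Open Scope R_scope.

Definition zeta (t : R) : R := 2 / (1 - t ^ 2).
(* phi(t) = 2 artanh t = ln((1+t)/(1-t)) on [0,1) *)
Definition phi (t : R) : R := ln ((1 + t) / (1 - t)).
(* psi = e^{lambda * phi}, the case rho = lambda * zeta *)
Definition psi (lam t : R) : R := exp (lam * phi t).
Definition f_lam (lam x : R) : R := x * (zeta x) ^ 2 * psi lam x.
Definition g_lam (lam x : R) : R := x * zeta x * psi lam x.

(* m(lambda,a,b) = (g(b)-g(a)) / int_a^b f ; the integrability proof is a
   parameter (RiemannInt is proof-irrelevant in its value). *)
Definition m_lam (lam a b : R) (pr : Riemann_integrable (f_lam lam) a b) : R :=
  (g_lam lam b - g_lam lam a) / RiemannInt pr.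

(* m(a,b) := m(0,a,b) = (1+ab)/(a+b) *)
Definition m0 (a b : R) : R := (1 + a * b) / (a + b).

(* Main.v *)
Require Import Defs.
From Stdlib Require Import Reals Lra Field.
From Coquelicot Require Import Coquelicot.
Open Scope R_scope.
Ltac conds a b x :=
  let h1 := fresh in let h2 := fresh in let h3 := fresh in let h4 := fresh in
  assert (h1 : 1 + - x <> 0) by lra;
  assert (h2 : 0 < (1 + x) * / (1 + - x)) by
    (apply Rmult_lt_0_compat; try lra; apply Rinv_0_lt_compat; lra);
  assert (h3 : 1 + - (x*(x*1)) <> 0) by
    (replace (1 + - (x*(x*1))) with ((1-x)*(1+x)) by ring;
     apply Rmult_integral_contrapositive; split; lra);
  assert (h4 : a + b <> 0) by lra;
  repeat split; auto; try (apply Rmult_integral_contrapositive; split; auto).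

Lemma der (a b lam x : R) : 0 <= a -> a < b -> -1 < x < 1 ->
  is_derive (fun x => psi lam x * (2*x/(1-x^2) - 2*(x-a)*(b-x)/((a+b)*(1-x^2)))) x
   ((lam + m0 a b) * f_lam lam x - lam * zeta x * psi lam x * (2*(x-a)*(b-x)/((a+b)*(1-x^2)))).
Proof.
  intros Ha Hab Hx.
  unfold f_lam, psi, zeta, phi, m0.
  assert (h1 : 1 - x <> 0) by lra.
  assert (h2 : 1 + x <> 0) by lra.
  assert (h3 : 1 - x^2 <> 0) by (replace (1-x^2) with ((1-x)*(1+x)) by ring; apply Rmult_integral_contrapositive; auto).
  assert (h4 : a + b <> 0) by lra.
  auto_derive.
  - conds a b x.
  - replace (1 + - (x*(x*1))) with (1-x^2) by ring.
    change ((1+x)/(1-x)) with ((1 + x) * / (1 + - x)).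
    set (E := exp _). unfold Rminus. field. repeat split; auto.
Qed.

Definition Kf (a b x : R) := 2*(x-a)*(b-x)/((a+b)*(1-x^2)).
Definition wf (a b lam x : R) := lam * zeta x * psi lam x * Kf a b x.
Definition uf (a b lam x : R) := psi lam x * (2*x/(1-x^2) - Kf a b x).
Definition Ff (a b lam x : R) := (lam + m0 a b) * f_lam lam x - wf a b lam x.

Lemma cont_f (a b lam x : R) : 0 <= a -> a < b -> -1 < x < 1 -> continuous (f_lam lam) x.
Proof.
  intros. apply (@ex_derive_continuous R_AbsRing R_NormedModule). unfold f_lam, psi, zeta, phi. auto_derive. conds a b x.
Qed.
Lemma cont_w (a b lam x : R) : 0 <= a -> a < b -> -1 < x < 1 -> continuous (wf a b lam) x.
Proof.
  intros. apply (@ex_derive_continuous R_AbsRing R_NormedModule). unfold wf, Kf, psi, zeta, phi. auto_derive. conds a b x.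
Qed.
Lemma cont_F (a b lam x : R) : 0 <= a -> a < b -> -1 < x < 1 -> continuous (Ff a b lam) x.
Proof.
  intros. apply (@ex_derive_continuous R_AbsRing R_NormedModule). unfold Ff, wf, f_lam, Kf, psi, zeta, phi. auto_derive. conds a b x.
Qed.

Theorem mainTheorem8 (a b lam : R) (pr : Riemann_integrable (f_lam lam) a b) :
  0 <= a -> a < b -> b < 1 -> 0 <= lam ->
  m_lam lam a b pr <= lam + m0 a b /\
  (m_lam lam a b pr = lam + m0 a b <-> lam = 0).
Proof.
  intros Ha Hab Hb Hl.
  set (c := m0 a b).
  assert (Hmin : Rmin a b = a) by (apply Rmin_left; lra).
  assert (Hmax : Rmax a b = b) by (apply Rmax_right; lra).
  assert (HI : is_RInt (Ff a b lam) a b (minus (uf a b lam b) (uf a b lam a))).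
  { apply (@is_RInt_derive R_CompleteNormedModule); rewrite Hmin, Hmax; intros x Hx.
    - apply der; lra.
    - apply cont_F; lra. }
  assert (exf : ex_RInt (f_lam lam) a b) by (apply ex_RInt_Reals_1; exact pr).
  assert (exw : ex_RInt (wf a b lam) a b).
  { apply (@ex_RInt_continuous R_CompleteNormedModule). rewrite Hmin, Hmax. intros x Hx. apply cont_w; lra. }
  set (If := RInt (f_lam lam) a b).
  set (Iw := RInt (wf a b lam) a b).
  assert (Hf : is_RInt (f_lam lam) a b If) by (apply (@RInt_correct R_CompleteNormedModule); auto).
  assert (Hw : is_RInt (wf a b lam) a b Iw) by (apply (@RInt_correct R_CompleteNormedModule); auto).
  assert (H2 : is_RInt (Ff a b lam) a b (minus (scal (lam + c) If) Iw)).
  { eapply (@is_RInt_ext R_NormedModule); [| apply (@is_RInt_minus R_NormedModule); [apply (@is_RInt_scal R_NormedModule); exact Hf | exact Hw]].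
    intros x _. unfold Ff. reflexivity. }
  assert (Heq : (lam + c) * If - Iw = uf a b lam b - uf a b lam a).
  { pose proof (is_RInt_unique _ _ _ _ H2) as E1.
    pose proof (is_RInt_unique _ _ _ _ HI) as E2.
    rewrite E1 in E2. exact E2. }
  assert (Hub : uf a b lam b = g_lam lam b).
  { unfold uf, g_lam, Kf, zeta.
    assert (1 - b^2 <> 0) by nra. assert (a+b<>0) by lra. field. auto. }
  assert (Hua : uf a b lam a = g_lam lam a).
  { unfold uf, g_lam, Kf, zeta.
    assert (1 - a^2 <> 0) by nra. assert (a+b<>0) by lra. field. auto. }
  assert (IfP : 0 < If).
  { apply RInt_gt_0; auto.
    - intros x Hx. unfold f_lam, psi. apply Rmult_lt_0_compat; [|apply exp_pos].
      apply Rmult_lt_0_compat; [lra|]. apply pow_lt. unfold zeta.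
      apply Rdiv_lt_0_compat; nra.
    - intros x Hx. apply cont_f with a b; lra. }
  assert (IwP : 0 <= Iw).
  { apply RInt_ge_0; auto. lra. intros x Hx. unfold wf, Kf, zeta, psi.
    assert (0 < 1 - x^2) by nra.
    apply Rmult_le_pos; [apply Rmult_le_pos; [apply Rmult_le_pos|]|].
    - lra.
    - apply Rlt_le, Rdiv_lt_0_compat; lra.
    - apply Rlt_le, exp_pos.
    - apply Rlt_le, Rdiv_lt_0_compat; [|apply Rmult_lt_0_compat]; nra. }
  assert (Hm : m_lam lam a b pr = lam + c - Iw / If).
  { unfold m_lam. rewrite <- (RInt_Reals _ _ _ pr). fold If.
    rewrite <- Hub, <- Hua, <- Heq. field. lra. }
  rewrite Hm. split.
  - assert (0 <= Iw / If) by (apply Rdiv_le_0_compat; lra). lra.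
  - split; intro H.
    + destruct (Req_dec lam 0) as [|Hn]; auto. exfalso.
      assert (IwS : 0 < Iw).
      { apply RInt_gt_0; auto.
        - intros x Hx. unfold wf, Kf, zeta, psi.
          assert (0 < 1 - x^2) by nra.
          apply Rmult_lt_0_compat; [apply Rmult_lt_0_compat; [apply Rmult_lt_0_compat|]|].
          + lra.
          + apply Rdiv_lt_0_compat; lra.
          + apply exp_pos.
          + apply Rdiv_lt_0_compat; [|apply Rmult_lt_0_compat]; nra.
        - intros x Hx. apply cont_w; lra. }
      assert (0 < Iw / If) by (apply Rdiv_lt_0_compat; lra). lra.
    + assert (Iw = 0).
      { unfold Iw. rewrite (RInt_ext _ (fun _ => 0)).
        - rewrite RInt_const. unfold scal; simpl; unfold mult; simpl; ring.
        - intros x _. unfold wf. rewrite H. change (0 * zeta x * psi 0 x * Kf a b x = 0 :> R); ring. }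
      rewrite H0. unfold Rdiv. ring.
Qed.
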